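(* There are at least nine pairwise non-isomorphic semi-equivelar maps on the closed surface of Euler characteristic $-1$ (three of type $(3^5,4)$, two of type $(3,4,8,4)$, two of type $(4,6,16)$ and two of type $(6^2,8)$). *)

(* Defs.v *)
From HB Require Import structures.
From mathcomp Require Import all_boot all_order all_algebra.
Set Implicit Arguments. Unset Strict Implicit. Unset Printing Implicit Defensive.

(* A map on n vertices ('I_n) is given by its list of faces; each face is a
   cycle of vertices (a duplicate-free sequence read cyclically). *)

Definition face_adj {n} (C : seq 'I_n) (x y : 'I_n) : bool :=
  [&& x \in C, y \in C & (next C x == y) || (next C y == x)].

Definition is_edge {n} (F : seq (seq 'I_n)) (x y : 'I_n) : bool :=
  (x != y) && has (fun C => face_adj C x y) F.

Definition face {n} (F : seq (seq 'I_n)) (i : 'I_(size F)) : seq 'I_n :=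
  nth [::] F i.

Definition num_edges {n} (F : seq (seq 'I_n)) : nat :=
  #|[set p : 'I_n * 'I_n | (val p.1 < val p.2)%N && is_edge F p.1 p.2]|.

Definition euler_char {n} (F : seq (seq 'I_n)) : int :=
  (n%:Z - (num_edges F)%:Z + (size F)%:Z)%R.

Definition cyc_eq {T : Type} (s t : seq T) : Prop :=
  exists k, rot k s = t \/ rot k (rev s) = t.

(* polyhedral map on a closed connected surface (without the vertex-link
   condition, which is part of [vertex_type] below): faces are polygons,
   every edge lies in exactly two faces, two distinct faces meet in the
   empty set, a vertex or an edge, and the edge graph is connected. *)
Definition polyhedral_map {n} (F : seq (seq 'I_n)) : Prop :=
  [/\ (forall C, C \in F -> uniq C /\ (3 <= size C)%N),
      (forall x y, is_edge F x y ->
         #|[set i : 'I_(size F) | face_adj (face i) x y]| = 2),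
      (forall i j : 'I_(size F), i != j ->
         let S := [seq v <- face i | v \in face j] in
         (size S <= 1)%N \/
         (size S = 2 /\ forall x y, x \in S -> y \in S -> x != y ->
             face_adj (face i) x y /\ face_adj (face j) x y))
    & (forall x y : 'I_n, connect (fun a b => is_edge F a b) x y)].

(* This also says the link of v is a cycle. *)
Definition vertex_type {n} (F : seq (seq 'I_n)) (v : 'I_n) (T : seq nat) : Prop :=
  exists s : seq 'I_(size F),
    [/\ uniq s,
        (forall i, i \in s <-> v \in face i),
        (forall i, i \in s -> exists w : 'I_n,
             face_adj (face i) v w && face_adj (face (next s i)) v w)
      & cyc_eq [seq size (face i) | i <- s] T].

Definition semi_equivelar {n} (F : seq (seq 'I_n)) (T : seq nat) : Prop :=
  polyhedral_map F /\ forall v, vertex_type F v T.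

Definition map_iso {n m} (F : seq (seq 'I_n)) (G : seq (seq 'I_m)) : Prop :=
  exists f : 'I_n -> 'I_m,
    [/\ bijective f,
        (forall C, C \in F -> exists2 D, D \in G & cyc_eq (map f C) D)
      & (forall D, D \in G -> exists2 C, C \in F & cyc_eq (map f C) D)].

Definition Map := {n : nat & seq (seq 'I_n)}.

Definition type_of (i : 'I_9) : seq nat :=
  if (val i < 3)%N then [:: 3; 3; 3; 3; 3; 4]
  else if (val i < 5)%N then [:: 3; 4; 8; 4]
  else if (val i < 7)%N then [:: 4; 6; 16]
  else [:: 6; 6; 8].

(* Main.v *)
Require Import Defs.
From HB Require Import structures.
From mathcomp Require Import all_boot all_order all_algebra.
From mathcomp Require Import zify.
Set Implicit Arguments. Unset Strict Implicit. Unset Printing Implicit Defensive.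

Definition toOrd n (s : seq nat) : seq 'I_n := pmap insub s.
Definition mkF n (L : seq (seq nat)) : seq (seq 'I_n) := map (@toOrd n) L.

Lemma toOrdK n s : all (fun x => x < n) s -> map val (@toOrd n s) = s.
Proof.
move=> h; rewrite /toOrd (pmap_filter (@insubK _ _ _)).
apply/all_filterP; apply: sub_all h => x hx; by rewrite insubT.
Qed.

Definition wfL n (L : seq (seq nat)) := all (all (fun x => x < n)) L.

Lemma mkFK n L : wfL n L -> map (map val) (mkF n L) = L.
Proof.
elim: L => //= C L IH /andP[hC hL]; by rewrite toOrdK // IH.
Qed.

Lemma card_ordP k (P : nat -> bool) :
  #|[set i : 'I_k | P i]| = count P (iota 0 k).
Proof.
rewrite cardsE -sum1_card.
rewrite -(big_mkord (fun i => P i) (fun _ => 1)) /index_iota subn0.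
by rewrite sum1_count.
Qed.

Lemma card_pairP n (P : nat -> nat -> bool) :
  #|[set p : 'I_n * 'I_n | P p.1 p.2]| = sumn [seq count (P x) (iota 0 n) | x <- iota 0 n].
Proof.
rewrite cardsE -sum1_card.
rewrite (eq_bigl (fun p : 'I_n * 'I_n => true && P p.1 p.2)) //.
rewrite -(@pair_big_dep _ _ _ 'I_n 'I_n xpredT (fun (i : 'I_n) (j : 'I_n) => P i j) (fun _ _ => 1)).
rewrite sumnE big_map.
rewrite -(big_mkord xpredT (fun i => \sum_(j < n | P i j) 1)) /index_iota subn0.
apply: eq_bigr => i _.
by rewrite -(big_mkord (fun j => P i j) (fun _ => 1)) /index_iota subn0 sum1_count.
Qed.

Definition fadjN (C : seq nat) (x y : nat) : bool :=
  [&& x \in C, y \in C & (next C x == y) || (next C y == x)].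
Definition edgeN (L : seq (seq nat)) (x y : nat) : bool :=
  (x != y) && has (fun C => fadjN C x y) L.
Definition check_faces (L : seq (seq nat)) := all (fun C => uniq C && (2 < size C)) L.
Definition check_edges n L :=
  all (fun x => all (fun y => edgeN L x y ==> (count (fun C => fadjN C x y) L == 2)) (iota 0 n)) (iota 0 n).
Definition meetN (Ci Cj : seq nat) :=
  let S := [seq v <- Ci | v \in Cj] in
  (size S <= 1) || ((size S == 2) &&
     all (fun x => all (fun y => (x != y) ==> fadjN Ci x y && fadjN Cj x y) S) S).
Definition check_meet (L : seq (seq nat)) :=
  all (fun i => all (fun j => (i != j) ==> meetN (nth [::] L i) (nth [::] L j)) (iota 0 (size L))) (iota 0 (size L)).
Definition check_conn n L :=
  all (fun x => (x == 0) || has (fun y => (y < x) && edgeN L x y) (iota 0 n)) (iota 0 n).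
Definition cyc_eqb (a b : seq nat) :=
  has (fun k => (rot k a == b) || (rot k (rev a) == b)) (iota 0 (size a).+1).
Definition starN n L (T : seq nat) v (s : seq nat) :=
  [&& all (fun i => i < size L) s, uniq s,
      all (fun i => (i \in s) == (v \in nth [::] L i)) (iota 0 (size L)),
      all (fun i => has (fun w => fadjN (nth [::] L i) v w && fadjN (nth [::] L (next s i)) v w) (iota 0 n)) s
    & cyc_eqb [seq size (nth [::] L i) | i <- s] T].
Definition check_stars n L T (S : seq (seq nat)) :=
  all (fun v => starN n L T v (nth [::] S v)) (iota 0 n).
Definition check_all n L T S :=
  [&& wfL n L, check_faces L, check_edges n L, check_meet L, check_conn n L & check_stars n L T S].

Lemma count_nth_iota T (d : T) (a : pred T) s :
  count (fun i => a (nth d s i)) (iota 0 (size s)) = count a s.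
Proof. by rewrite -count_map -/(mkseq _ _) mkseq_nth. Qed.

Section Gen.
Variables (n : nat) (L : seq (seq nat)).
Hypothesis hwf : wfL n L.
Hypothesis hfaces : check_faces L.
Let F := mkF n L.
Let hL : map (map val) F = L := mkFK hwf.

Lemma sizeF : size F = size L.
Proof. by rewrite -hL size_map. Qed.

Lemma F_uniq C : C \in F -> uniq C /\ 2 < size C.
Proof.
move=> hC; have : map val C \in L by rewrite -hL map_f.
move/(allP hfaces)/andP => [u s]; by rewrite (map_inj_uniq val_inj) size_map in u s.
Qed.

Lemma faceadjE (C : seq 'I_n) (x y : 'I_n) : uniq C -> face_adj C x y = fadjN (map val C) (val x) (val y).
Proof.
move=> u; rewrite /face_adj /fadjN !(mem_map val_inj) !(next_map val_inj) //; by rewrite !(inj_eq val_inj).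
Qed.

Lemma edgeE (x y : 'I_n) : is_edge F x y = edgeN L (val x) (val y).
Proof.
rewrite /is_edge /edgeN (inj_eq val_inj) -hL has_map; congr andb.
apply: eq_in_has => C hC /=; by rewrite faceadjE //; case: (F_uniq hC).
Qed.

Lemma faceE (i : 'I_(size F)) : map val (face i) = nth [::] L i.
Proof. by rewrite /face -hL (nth_map [::]). Qed.

Lemma face_in (i : 'I_(size F)) : face i \in F.
Proof. by rewrite /face mem_nth. Qed.

Lemma card_faces (x y : 'I_n) :
  #|[set i : 'I_(size F) | face_adj (face i) x y]| = count (fun C => fadjN C (val x) (val y)) L.
Proof.
rewrite (card_ordP _ (fun i => face_adj (nth [::] F i) x y)) (count_nth_iota [::] (fun C => face_adj C x y) F).
rewrite -hL count_map; apply: eq_in_count => C hC /=.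
by rewrite faceadjE //; case: (F_uniq hC).
Qed.

Lemma memI k (x : 'I_k) : (x : nat) \in iota 0 k.
Proof. by rewrite mem_iota /=. Qed.

Lemma poly_ok : check_edges n L -> check_meet L -> check_conn n L -> polyhedral_map F.
Proof.
move=> he hm hc; split.
- move=> C hC; case: (F_uniq hC) => u s; by split.
- move=> x y; rewrite edgeE card_faces => hxy.
  have := allP (allP he _ (memI x)) _ (memI y).
  by rewrite hxy => /eqP.
- move=> i j hij /=.
  have hi : (i : nat) \in iota 0 (size L) by rewrite -sizeF memI.
  have hj : (j : nat) \in iota 0 (size L) by rewrite -sizeF memI.
  have := allP (allP hm _ hi) _ hj; rewrite (inj_eq val_inj) hij /= -!faceE /meetN.
  have ui : uniq (face i) by case: (F_uniq (face_in i)).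
  have uj : uniq (face j) by case: (F_uniq (face_in j)).
  set S := [seq v <- face i | v \in face j].
  have hS : [seq v <- map val (face i) | v \in map val (face j)] = map val S.
    by rewrite filter_map; congr map; apply: eq_filter => v /=; rewrite (mem_map val_inj).
  rewrite hS size_map; case/orP => [h1|/andP[/eqP h2 h3]]; [by left | right].
  split => // x y hx hy hxy.
  have hx' : val x \in map val S by rewrite map_f.
  have hy' : val y \in map val S by rewrite map_f.
  have := allP (allP h3 _ hx') _ hy'; rewrite (inj_eq val_inj) hxy /= => /andP[a b].
  by rewrite !faceadjE.
- move=> x y.
  have sym : symmetric (fun a b : 'I_n => is_edge F a b).
    move=> a b; rewrite /is_edge eq_sym; congr andb; apply: eq_has => C.
    by rewrite /face_adj andbCA orbC.
  have key : forall k (x : 'I_n), val x = k -> forall z : 'I_n, val z = 0 ->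
      connect (fun a b => is_edge F a b) x z.
    move=> k; elim/ltn_ind: k => k IH x0 hx z hz.
    case/orP: (allP hc _ (memI x0)) => [/eqP h0 | /hasP [w hw /andP [hwx he']]].
      have -> : x0 = z by apply: val_inj => /=; rewrite h0 hz.
      exact: connect0.
    have wn : w < n by rewrite mem_iota in hw.
    apply: (connect_trans (y := Ordinal wn)).
      by apply: connect1; rewrite edgeE.
    by apply: (IH w _ (Ordinal wn)) => //; rewrite -hx.
  have zn : 0 < n by apply: leq_ltn_trans (leq0n x) (ltn_ord x).
  apply: (connect_trans (y := Ordinal zn)); first exact: (key _ x erefl).
  rewrite (sym_connect_sym sym); exact: (key _ y erefl).
Qed.

Lemma vtype_ok (T : seq nat) (v : 'I_n) (s : seq nat) :
  starN n L T v s -> vertex_type F v T.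
Proof.
case/and5P=> hs us hin hadj hcyc.
have hs' : all (fun i => i < size F) s by rewrite sizeF.
set s' := toOrd (size F) s.
have hs0 : map val s' = s by apply: toOrdK.
have us' : uniq s' by rewrite -(map_inj_uniq val_inj) hs0.
have memS (i : 'I_(size F)) : (i \in s') = (val i \in s) by rewrite -hs0 (mem_map val_inj).
exists s'; split => //.
- move=> i; rewrite memS.
  have hi : (i : nat) \in iota 0 (size L) by rewrite -sizeF memI.
  move/eqP: (allP hin _ hi) => ->; rewrite -faceE (mem_map val_inj); by [].
- move=> i hi; rewrite memS in hi.
  case/hasP: (allP hadj _ hi) => w hw /andP[a b].
  have wn : w < n by rewrite mem_iota in hw.
  exists (Ordinal wn).
  have ui : uniq (face i) by case: (F_uniq (face_in i)).
  have uj : uniq (face (next s' i)) by case: (F_uniq (face_in (next s' i))).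
  rewrite !faceadjE // !faceE /=.
  have -> : val (next s' i) = next s (val i) by rewrite -hs0 (next_map val_inj).
  by rewrite a b.
- have -> : [seq size (face i) | i <- s'] = [seq size (nth [::] L i) | i <- s].
    rewrite -hs0 -map_comp; apply: eq_map => i /=; by rewrite -faceE size_map.
  case/hasP: hcyc => k _ /orP[/eqP h|/eqP h]; exists k; [by left | by right].
Qed.

Definition numedgesN n L := sumn [seq count (fun y => (x < y) && edgeN L x y) (iota 0 n) | x <- iota 0 n].

Lemma numedges_ok : num_edges F = numedgesN n L.
Proof.
rewrite /num_edges.
have -> : [set p : 'I_n * 'I_n | (val p.1 < val p.2) && is_edge F p.1 p.2] =
    [set p : 'I_n * 'I_n | (p.1 < p.2) && edgeN L p.1 p.2] by apply/setP => p; rewrite !inE edgeE.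
exact: (card_pairP n (fun x y => (x < y) && edgeN L x y)).
Qed.

Lemma euler_ok : euler_char F = (n%:Z - (numedgesN n L)%:Z + (size L)%:Z)%R.
Proof. by rewrite /euler_char numedges_ok sizeF. Qed.
End Gen.

Lemma semi_ok n L T S : check_all n L T S -> semi_equivelar (mkF n L) T.
Proof.
case/and5P => hwf hf he hm /andP[hc hs]; split; first exact: poly_ok.
move=> v; apply: (vtype_ok hwf hf (s := nth [::] S v)).
exact: (allP hs _ (memI v)).
Qed.



Inductive rexp := Base of nat | Cg of nat & rexp & rexp.

Fixpoint semO n (F : seq (seq 'I_n)) (r : rexp) (x y : 'I_n) : bool :=
  match r with
  | Base k => has (fun C => [&& size C == k, x \in C & y \in C]) F
  | Cg k r1 r2 => k <= #|[set z | semO F r1 x z && semO F r2 z y]|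
  end.

Definition invO n (F : seq (seq 'I_n)) r := #|[set p : 'I_n * 'I_n | semO F r p.1 p.2]|.

Section Iso.
Variables (n m : nat) (F : seq (seq 'I_n)) (G : seq (seq 'I_m)) (f : 'I_n -> 'I_m).
Hypothesis bf : bijective f.
Hypothesis hFG : forall C, C \in F -> exists2 D, D \in G & cyc_eq (map f C) D.
Hypothesis hGF : forall D, D \in G -> exists2 C, C \in F & cyc_eq (map f C) D.

Lemma cyc_mem C D : cyc_eq (map f C) D -> D =i map f C.
Proof. by case=> k [<-|<-] z; rewrite mem_rot ?mem_rev. Qed.
Lemma cyc_size C D : cyc_eq (map f C) D -> size D = size C.
Proof. by case=> k [<-|<-]; rewrite size_rot ?size_rev size_map. Qed.

Lemma iso_sem r x y : semO F r x y = semO G r (f x) (f y).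
Proof.
have injf := bij_inj bf; case: bf => g fgK gfK.
elim: r x y => [k|k r1 IH1 r2 IH2] x y /=.
- apply/hasP/hasP.
  + case=> C hC /and3P[/eqP hs hx hy]; case: (hFG hC) => D hD hj; exists D => //.
    by rewrite (cyc_size hj) hs eqxx !(cyc_mem hj) !map_f.
  + case=> D hD /and3P[/eqP hs hx hy]; case: (hGF hD) => C hC hj; exists C => //.
    rewrite !(cyc_mem hj) !(mem_map injf) in hx hy.
    by rewrite -(cyc_size hj) hs eqxx hx hy.
- congr (k <= _).
  rewrite -(card_imset [set z | semO F r1 x z && semO F r2 z y] injf).
  apply: eq_card => z; rewrite [in RHS]inE; apply/imsetP/idP.
    by case=> z' hz' ->; rewrite inE IH1 IH2 in hz'.
  move=> h; exists (g z); last by rewrite gfK.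
  by rewrite inE IH1 IH2 gfK.
Qed.

Lemma iso_inv r : invO F r = invO G r.
Proof.
have injf := bij_inj bf; have bf' := bf; case: bf' => g fgK gfK.
pose h := fun p : 'I_n * 'I_n => (f p.1, f p.2).
have injh : injective h by move=> [a b] [c d] [/injf -> /injf ->].
rewrite /invO -(card_imset [set p : 'I_n * 'I_n | semO F r p.1 p.2] injh).
apply: eq_card => p; rewrite [in RHS]inE; apply/imsetP/idP.
  by case=> q hq ->; rewrite inE in hq; rewrite /= -!iso_sem.
move=> hp; exists (g p.1, g p.2); last by rewrite /h /= !gfK; case: p hp.
by rewrite inE /= !iso_sem !gfK.
Qed.
End Iso.

Lemma mapiso_inv n m (F : seq (seq 'I_n)) (G : seq (seq 'I_m)) :
  map_iso F G -> forall r, invO F r = invO G r.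
Proof. by case=> f [bf h1 h2] r; apply: (iso_inv bf h1 h2). Qed.

Definition get (M : seq (seq bool)) x y := nth false (nth [::] M x) y.
Definition mat n (f : nat -> nat -> bool) := [seq [seq f x y | y <- iota 0 n] | x <- iota 0 n].
Lemma get_mat n f x y : x < n -> y < n -> get (mat n f) x y = f x y.
Proof.
move=> hx hy; rewrite /get /mat (nth_map 0) ?size_iota // nth_iota // add0n.
by rewrite (nth_map 0) ?size_iota // nth_iota.
Qed.

Fixpoint semN n (L : seq (seq nat)) (r : rexp) : seq (seq bool) :=
  match r with
  | Base k => mat n (fun x y => has (fun C => [&& size C == k, x \in C & y \in C]) L)
  | Cg k r1 r2 => let M1 := semN n L r1 in let M2 := semN n L r2 in
      mat n (fun x y => k <= count (fun z => get M1 x z && get M2 z y) (iota 0 n))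
  end.
Definition cntM n M := sumn [seq count (fun y => get M x y) (iota 0 n) | x <- iota 0 n].
Definition invN n L r := cntM n (semN n L r).

Lemma sem_ok n L (hwf : wfL n L) r (x y : 'I_n) : semO (mkF n L) r x y = get (semN n L r) x y.
Proof.
elim: r x y => [k|k r1 IH1 r2 IH2] x y /=; rewrite get_mat //.
- rewrite -{2}(mkFK hwf) has_map; apply: eq_has => C /=; by rewrite size_map !(mem_map val_inj).
- congr (k <= _).
  rewrite -(card_ordP n (fun z => get (semN n L r1) x z && get (semN n L r2) z y)).
  by apply: eq_card => z; rewrite !inE IH1 IH2.
Qed.

Lemma inv_ok n L (hwf : wfL n L) r : invO (mkF n L) r = invN n L r.
Proof.
rewrite /invO /invN /cntM -(card_pairP n (fun x y => get (semN n L r) x y)).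
by apply: eq_card => p; rewrite !inE sem_ok.
Qed.

Definition L0 : seq (seq nat) := [:: [:: 0; 1; 7; 2]; [:: 11; 3; 8; 4]; [:: 9; 10; 5; 6]; [:: 0; 1; 4]; [:: 0; 2; 5]; [:: 0; 3; 5]; [:: 0; 3; 6]; [:: 0; 4; 6]; [:: 1; 7; 9]; [:: 1; 8; 4]; [:: 1; 8; 10]; [:: 1; 9; 10]; [:: 7; 2; 11]; [:: 7; 11; 10]; [:: 7; 8; 9]; [:: 7; 8; 10]; [:: 2; 11; 4]; [:: 2; 4; 6]; [:: 2; 5; 6]; [:: 11; 3; 5]; [:: 11; 10; 5]; [:: 3; 8; 9]; [:: 3; 9; 6]].
Definition S0 : seq (seq nat) := [:: [:: 0; 3; 7; 6; 5; 4]; [:: 0; 3; 9; 10; 11; 8]; [:: 0; 4; 18; 17; 16; 12]; [:: 1; 19; 5; 6; 22; 21]; [:: 1; 9; 3; 7; 17; 16]; [:: 2; 18; 4; 5; 19; 20]; [:: 2; 18; 17; 7; 6; 22]; [:: 0; 8; 14; 15; 13; 12]; [:: 1; 9; 10; 15; 14; 21]; [:: 2; 11; 8; 14; 21; 22]; [:: 2; 11; 10; 15; 13; 20]; [:: 1; 16; 12; 13; 20; 19]].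
Definition L1 : seq (seq nat) := [:: [:: 0; 1; 7; 2]; [:: 11; 3; 8; 4]; [:: 9; 10; 5; 6]; [:: 0; 1; 4]; [:: 0; 2; 3]; [:: 0; 3; 6]; [:: 0; 4; 5]; [:: 0; 5; 6]; [:: 1; 7; 8]; [:: 1; 8; 9]; [:: 1; 4; 10]; [:: 1; 9; 10]; [:: 7; 2; 11]; [:: 7; 11; 10]; [:: 7; 8; 5]; [:: 7; 10; 5]; [:: 2; 11; 6]; [:: 2; 3; 9]; [:: 2; 9; 6]; [:: 11; 3; 6]; [:: 11; 4; 10]; [:: 3; 8; 9]; [:: 8; 4; 5]].
Definition S1 : seq (seq nat) := [:: [:: 0; 3; 6; 7; 5; 4]; [:: 0; 3; 10; 11; 9; 8]; [:: 0; 4; 17; 18; 16; 12]; [:: 1; 19; 5; 4; 17; 21]; [:: 1; 20; 10; 3; 6; 22]; [:: 2; 7; 6; 22; 14; 15]; [:: 2; 7; 5; 19; 16; 18]; [:: 0; 8; 14; 15; 13; 12]; [:: 1; 21; 9; 8; 14; 22]; [:: 2; 11; 9; 21; 17; 18]; [:: 2; 11; 10; 20; 13; 15]; [:: 1; 19; 16; 12; 13; 20]].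
Definition L2 : seq (seq nat) := [:: [:: 0; 1; 7; 2]; [:: 3; 10; 8; 4]; [:: 9; 5; 6; 11]; [:: 0; 1; 4]; [:: 0; 2; 3]; [:: 0; 3; 5]; [:: 0; 4; 6]; [:: 0; 5; 6]; [:: 1; 7; 8]; [:: 1; 8; 9]; [:: 1; 4; 5]; [:: 1; 9; 5]; [:: 7; 2; 10]; [:: 7; 10; 11]; [:: 7; 8; 6]; [:: 7; 6; 11]; [:: 2; 3; 11]; [:: 2; 10; 9]; [:: 2; 9; 11]; [:: 3; 10; 11]; [:: 3; 4; 5]; [:: 10; 8; 9]; [:: 8; 4; 6]].
Definition S2 : seq (seq nat) := [:: [:: 0; 3; 6; 7; 5; 4]; [:: 0; 3; 10; 11; 9; 8]; [:: 0; 4; 16; 18; 17; 12]; [:: 1; 19; 16; 4; 5; 20]; [:: 1; 20; 10; 3; 6; 22]; [:: 2; 7; 5; 20; 10; 11]; [:: 2; 7; 6; 22; 14; 15]; [:: 0; 8; 14; 15; 13; 12]; [:: 1; 21; 9; 8; 14; 22]; [:: 2; 11; 9; 21; 17; 18]; [:: 1; 19; 13; 12; 17; 21]; [:: 2; 15; 13; 19; 16; 18]].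
Definition L3 : seq (seq nat) := [:: [:: 0; 1; 2]; [:: 3; 5; 9]; [:: 4; 11; 7]; [:: 12; 6; 8]; [:: 10; 18; 16]; [:: 19; 13; 17]; [:: 21; 23; 15]; [:: 22; 20; 14]; [:: 0; 1; 5; 3]; [:: 1; 2; 8; 6]; [:: 0; 2; 7; 4]; [:: 5; 9; 17; 13]; [:: 3; 9; 16; 10]; [:: 4; 11; 6; 12]; [:: 11; 7; 14; 20]; [:: 12; 8; 15; 21]; [:: 10; 18; 13; 19]; [:: 18; 16; 15; 23]; [:: 19; 17; 14; 22]; [:: 21; 23; 20; 22]; [:: 0; 4; 12; 21; 22; 19; 10; 3]; [:: 1; 6; 11; 20; 23; 18; 13; 5]; [:: 2; 7; 14; 17; 9; 16; 15; 8]].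
Definition S3 : seq (seq nat) := [:: [:: 0; 8; 20; 10]; [:: 0; 8; 21; 9]; [:: 0; 9; 22; 10]; [:: 1; 8; 20; 12]; [:: 2; 10; 20; 13]; [:: 1; 8; 21; 11]; [:: 3; 9; 21; 13]; [:: 2; 10; 22; 14]; [:: 3; 9; 22; 15]; [:: 1; 11; 22; 12]; [:: 4; 12; 20; 16]; [:: 2; 13; 21; 14]; [:: 3; 13; 20; 15]; [:: 5; 11; 21; 16]; [:: 7; 14; 22; 18]; [:: 6; 15; 22; 17]; [:: 4; 12; 22; 17]; [:: 5; 11; 22; 18]; [:: 4; 16; 21; 17]; [:: 5; 16; 20; 18]; [:: 7; 14; 21; 19]; [:: 6; 15; 20; 19]; [:: 7; 18; 20; 19]; [:: 6; 17; 21; 19]].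
Definition L4 : seq (seq nat) := [:: [:: 0; 1; 2]; [:: 3; 5; 9]; [:: 4; 11; 7]; [:: 12; 6; 8]; [:: 10; 18; 16]; [:: 19; 20; 14]; [:: 21; 22; 15]; [:: 23; 13; 17]; [:: 0; 1; 5; 3]; [:: 1; 2; 8; 6]; [:: 0; 2; 7; 4]; [:: 5; 9; 17; 13]; [:: 3; 9; 16; 10]; [:: 4; 11; 6; 12]; [:: 11; 7; 14; 20]; [:: 12; 8; 15; 21]; [:: 10; 18; 20; 19]; [:: 18; 16; 15; 22]; [:: 19; 14; 17; 23]; [:: 21; 22; 13; 23]; [:: 0; 4; 12; 21; 23; 19; 10; 3]; [:: 1; 6; 11; 20; 18; 22; 13; 5]; [:: 2; 7; 14; 17; 9; 16; 15; 8]].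
Definition S4 : seq (seq nat) := [:: [:: 0; 8; 20; 10]; [:: 0; 8; 21; 9]; [:: 0; 9; 22; 10]; [:: 1; 8; 20; 12]; [:: 2; 10; 20; 13]; [:: 1; 8; 21; 11]; [:: 3; 9; 21; 13]; [:: 2; 10; 22; 14]; [:: 3; 9; 22; 15]; [:: 1; 11; 22; 12]; [:: 4; 12; 20; 16]; [:: 2; 13; 21; 14]; [:: 3; 13; 20; 15]; [:: 7; 11; 21; 19]; [:: 5; 14; 22; 18]; [:: 6; 15; 22; 17]; [:: 4; 12; 22; 17]; [:: 7; 11; 22; 18]; [:: 4; 16; 21; 17]; [:: 5; 16; 20; 18]; [:: 5; 14; 21; 16]; [:: 6; 15; 20; 19]; [:: 6; 17; 21; 19]; [:: 7; 18; 20; 19]].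
Definition L5 : seq (seq nat) := [:: [:: 0; 1; 4; 9; 6; 2]; [:: 3; 5; 11; 18; 14; 8]; [:: 13; 21; 28; 20; 12; 7]; [:: 22; 17; 10; 16; 25; 30]; [:: 24; 32; 39; 31; 23; 15]; [:: 33; 27; 19; 26; 35; 41]; [:: 44; 46; 45; 40; 34; 38]; [:: 47; 42; 36; 29; 37; 43]; [:: 0; 1; 5; 3]; [:: 4; 9; 16; 10]; [:: 2; 6; 12; 7]; [:: 11; 18; 26; 19]; [:: 8; 14; 23; 15]; [:: 13; 21; 17; 22]; [:: 28; 20; 29; 36]; [:: 30; 25; 34; 38]; [:: 24; 32; 27; 33]; [:: 39; 31; 40; 45]; [:: 41; 35; 37; 43]; [:: 44; 46; 42; 47]; [:: 0; 2; 7; 13; 22; 30; 38; 44; 47; 43; 41; 33; 24; 15; 8; 3]; [:: 1; 4; 10; 17; 21; 28; 36; 42; 46; 45; 39; 32; 27; 19; 11; 5]; [:: 9; 6; 12; 20; 29; 37; 35; 26; 18; 14; 23; 31; 40; 34; 25; 16]].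
Definition S5 : seq (seq nat) := [:: [:: 0; 8; 20]; [:: 0; 8; 21]; [:: 0; 10; 20]; [:: 1; 8; 20]; [:: 0; 9; 21]; [:: 1; 8; 21]; [:: 0; 10; 22]; [:: 2; 10; 20]; [:: 1; 12; 20]; [:: 0; 9; 22]; [:: 3; 9; 21]; [:: 1; 11; 21]; [:: 2; 10; 22]; [:: 2; 13; 20]; [:: 1; 12; 22]; [:: 4; 12; 20]; [:: 3; 9; 22]; [:: 3; 13; 21]; [:: 1; 11; 22]; [:: 5; 11; 21]; [:: 2; 14; 22]; [:: 2; 13; 21]; [:: 3; 13; 20]; [:: 4; 12; 22]; [:: 4; 16; 20]; [:: 3; 15; 22]; [:: 5; 11; 22]; [:: 5; 16; 21]; [:: 2; 14; 21]; [:: 7; 14; 22]; [:: 3; 15; 20]; [:: 4; 17; 22]; [:: 4; 16; 21]; [:: 5; 16; 20]; [:: 6; 15; 22]; [:: 5; 18; 22]; [:: 7; 14; 21]; [:: 7; 18; 22]; [:: 6; 15; 20]; [:: 4; 17; 21]; [:: 6; 17; 22]; [:: 5; 18; 20]; [:: 7; 19; 21]; [:: 7; 18; 20]; [:: 6; 19; 20]; [:: 6; 17; 21]; [:: 6; 19; 21]; [:: 7; 19; 20]].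
Definition L6 : seq (seq nat) := [:: [:: 0; 1; 4; 9; 6; 2]; [:: 3; 5; 11; 18; 14; 8]; [:: 13; 21; 28; 20; 12; 7]; [:: 22; 17; 10; 16; 25; 30]; [:: 24; 32; 41; 31; 23; 15]; [:: 33; 43; 38; 29; 39; 44]; [:: 46; 36; 47; 42; 34; 40]; [:: 37; 27; 19; 26; 35; 45]; [:: 0; 1; 5; 3]; [:: 4; 9; 16; 10]; [:: 2; 6; 12; 7]; [:: 11; 18; 26; 19]; [:: 8; 14; 23; 15]; [:: 13; 21; 17; 22]; [:: 28; 20; 29; 38]; [:: 30; 25; 34; 40]; [:: 24; 32; 43; 33]; [:: 41; 31; 42; 47]; [:: 44; 39; 35; 45]; [:: 46; 36; 27; 37]; [:: 0; 2; 7; 13; 22; 30; 40; 46; 37; 45; 44; 33; 24; 15; 8; 3]; [:: 1; 4; 10; 17; 21; 28; 38; 43; 32; 41; 47; 36; 27; 19; 11; 5]; [:: 9; 6; 12; 20; 29; 39; 35; 26; 18; 14; 23; 31; 42; 34; 25; 16]].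
Definition S6 : seq (seq nat) := [:: [:: 0; 8; 20]; [:: 0; 8; 21]; [:: 0; 10; 20]; [:: 1; 8; 20]; [:: 0; 9; 21]; [:: 1; 8; 21]; [:: 0; 10; 22]; [:: 2; 10; 20]; [:: 1; 12; 20]; [:: 0; 9; 22]; [:: 3; 9; 21]; [:: 1; 11; 21]; [:: 2; 10; 22]; [:: 2; 13; 20]; [:: 1; 12; 22]; [:: 4; 12; 20]; [:: 3; 9; 22]; [:: 3; 13; 21]; [:: 1; 11; 22]; [:: 7; 11; 21]; [:: 2; 14; 22]; [:: 2; 13; 21]; [:: 3; 13; 20]; [:: 4; 12; 22]; [:: 4; 16; 20]; [:: 3; 15; 22]; [:: 7; 11; 22]; [:: 7; 19; 21]; [:: 2; 14; 21]; [:: 5; 14; 22]; [:: 3; 15; 20]; [:: 4; 17; 22]; [:: 4; 16; 21]; [:: 5; 16; 20]; [:: 6; 15; 22]; [:: 7; 18; 22]; [:: 6; 19; 21]; [:: 7; 19; 20]; [:: 5; 14; 21]; [:: 5; 18; 22]; [:: 6; 15; 20]; [:: 4; 17; 21]; [:: 6; 17; 22]; [:: 5; 16; 21]; [:: 5; 18; 20]; [:: 7; 18; 20]; [:: 6; 19; 20]; [:: 6; 17; 21]].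
Definition L7 : seq (seq nat) := [:: [:: 0; 1; 4; 10; 6; 2]; [:: 0; 1; 5; 12; 8; 3]; [:: 7; 11; 19; 14; 6; 2]; [:: 7; 11; 4; 10; 18; 15]; [:: 9; 13; 21; 16; 8; 3]; [:: 9; 13; 5; 12; 20; 17]; [:: 22; 23; 21; 16; 18; 15]; [:: 22; 23; 19; 14; 20; 17]; [:: 0; 2; 7; 15; 22; 17; 9; 3]; [:: 1; 4; 11; 19; 23; 21; 13; 5]; [:: 10; 6; 14; 20; 12; 8; 16; 18]].
Definition S7 : seq (seq nat) := [:: [:: 0; 1; 8]; [:: 0; 1; 9]; [:: 0; 2; 8]; [:: 1; 4; 8]; [:: 0; 3; 9]; [:: 1; 5; 9]; [:: 0; 2; 10]; [:: 2; 3; 8]; [:: 1; 4; 10]; [:: 4; 5; 8]; [:: 0; 3; 10]; [:: 2; 3; 9]; [:: 1; 5; 10]; [:: 4; 5; 9]; [:: 2; 7; 10]; [:: 3; 6; 8]; [:: 4; 6; 10]; [:: 5; 7; 8]; [:: 3; 6; 10]; [:: 2; 7; 9]; [:: 5; 7; 10]; [:: 4; 6; 9]; [:: 6; 7; 8]; [:: 6; 7; 9]].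
Definition L8 : seq (seq nat) := [:: [:: 0; 1; 4; 10; 6; 2]; [:: 0; 1; 5; 12; 8; 3]; [:: 7; 11; 20; 14; 6; 2]; [:: 7; 11; 4; 10; 19; 15]; [:: 9; 17; 22; 16; 8; 3]; [:: 9; 17; 20; 14; 21; 18]; [:: 23; 13; 22; 16; 19; 15]; [:: 23; 13; 5; 12; 21; 18]; [:: 0; 2; 7; 15; 23; 18; 9; 3]; [:: 1; 4; 11; 20; 17; 22; 13; 5]; [:: 10; 6; 14; 21; 12; 8; 16; 19]].
Definition S8 : seq (seq nat) := [:: [:: 0; 1; 8]; [:: 0; 1; 9]; [:: 0; 2; 8]; [:: 1; 4; 8]; [:: 0; 3; 9]; [:: 1; 7; 9]; [:: 0; 2; 10]; [:: 2; 3; 8]; [:: 1; 4; 10]; [:: 4; 5; 8]; [:: 0; 3; 10]; [:: 2; 3; 9]; [:: 1; 7; 10]; [:: 6; 7; 9]; [:: 2; 5; 10]; [:: 3; 6; 8]; [:: 4; 6; 10]; [:: 4; 5; 9]; [:: 5; 7; 8]; [:: 3; 6; 10]; [:: 2; 5; 9]; [:: 5; 7; 10]; [:: 4; 6; 9]; [:: 6; 7; 8]].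


Definition D : seq (nat * seq (seq nat)) :=
  [:: (12, L0); (12, L1); (12, L2); (24, L3); (24, L4); (48, L5); (48, L6); (24, L7); (24, L8)].
Definition SS := [:: S0; S1; S2; S3; S4; S5; S6; S7; S8].
Definition typeN (k : nat) : seq nat :=
  if (k < 3)%N then [:: 3; 3; 3; 3; 3; 4]
  else if (k < 5)%N then [:: 3; 4; 8; 4]
  else if (k < 7)%N then [:: 4; 6; 16]
  else [:: 6; 6; 8].
Definition rs := [:: Base 3; Base 4; Base 6; Base 8; Cg 6 (Base 3) (Base 3);
  Cg 1 (Base 4) (Base 4); Cg 1 (Base 6) (Base 6);
  Cg 1 (Cg 1 (Base 4) (Base 6)) (Cg 1 (Base 4) (Base 6))].
Definition invsN (d : nat * seq (seq nat)) := map (invN d.1 d.2) rs.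

Definition okN k := let d := nth (0, [::]) D k in
  check_all d.1 d.2 (typeN k) (nth [::] SS k) && ((d.1 + size d.2).+1 == numedgesN d.1 d.2).

Lemma all_ok : all okN (iota 0 9).
Proof. vm_compute; reflexivity. Qed.

Lemma uniq_inv : uniq (map invsN D).
Proof. vm_compute; reflexivity. Qed.

Definition MM (i : 'I_9) : Map :=
  existT _ (nth (0, [::]) D i).1 (mkF (nth (0, [::]) D i).1 (nth (0, [::]) D i).2).

Lemma euler_m1 n L : wfL n L -> check_faces L -> (n + size L).+1 = numedgesN n L -> euler_char (mkF n L) = (-1)%R.
Proof. move=> hwf hf he; rewrite (euler_ok hwf hf) -he; lia. Qed.

Theorem theorem1 :
  exists M : 'I_9 -> Map,
    (forall i, semi_equivelar (tagged (M i)) (type_of i) /\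
               euler_char (tagged (M i)) = (-1)%R) /\
    (forall i j, i != j -> ~ map_iso (tagged (M i)) (tagged (M j))).
Proof.
have ok (i : 'I_9) : okN i by apply: (allP all_ok); rewrite mem_iota /=.
exists MM; split.
- move=> i; have := ok i; rewrite /okN /= => /andP[hc /eqP he].
  split; first exact: (semi_ok hc).
  case/and3P: hc => hwf hf _.
  exact: euler_m1.
- move=> i j hij hiso.
  have hc (k : 'I_9) : wfL (nth (0, [::]) D k).1 (nth (0, [::]) D k).2.
    by have := ok k; rewrite /okN /check_all => /andP[/andP[]].
  have : invsN (nth (0, [::]) D i) = invsN (nth (0, [::]) D j).
    rewrite /invsN; apply: eq_map => r.
    by rewrite -!inv_ok // (mapiso_inv hiso).
  move=> h; move/negP: hij; apply; apply/eqP.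
  have hi : i < size (map invsN D) by rewrite size_map.
  have hj : j < size (map invsN D) by rewrite size_map.
  have := nth_uniq [::] hi hj uniq_inv.
  rewrite !(nth_map (0, [::])) // h eqxx => /esym/eqP hv.
  exact: val_inj.
Qed.
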